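(* Let $\mathbb{T}=\mathbb{R}/\mathbb{Z}$ and let $u:\mathbb{T}\times[0,T]\to\mathbb{R}$ be smooth with $u_{xx}\in C(\mathbb{T}\times[0,T])$. Then there exists $C>0$ such that, when $\Delta t$ is sufficiently small, for all $n\in\{0,\dots,N-1\}$, $$\frac12\le\frac{1}{1+C\Delta t_n}\le|X^n|_{W^{1,\infty}(\mathbb{T})}\le1+C\Delta t_n\le\frac32,\qquad |X^n|_{W^{2,\infty}(\mathbb{T})}\le C\Delta t_n.$$
   Context: Temporal mesh $0=t^0<\dots<t^N=T$, $\Delta t_n=t^{n+1}-t^n$, $\Delta t=\max_n\Delta t_n$. $X^n(x)=x-\Delta t_n(\tfrac16k_1^n+\tfrac46k_2^n+\tfrac16k_3^n)(x)$ with $k_1^n(x)=u(x,t^{n+1})$, $k_2^n(x)=u(x-\tfrac{\Delta t_n}{2}k_1^n(x),t^{n+1}-\tfrac{\Delta t_n}{2})$, $k_3^n(x)=u(x-\Delta t_n(-k_1^n(x)+2k_2^n(x)),t^{n+1}-\Delta t_n)$. Seminorms: $|f|_{W^{m,\infty}(\mathbb{T})}=\|D^mf\|_{L^\infty(\mathbb{T})}$, $D=d/dx$. *)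

(* Defs.v *)
From Stdlib Require Import Reals.
From Coquelicot Require Import Coquelicot.
Open Scope R_scope.

(* Stages of the third-order (Kutta) RK characteristic foot map.
   tn1 = t^{n+1}, dt = Delta t_n. *)
Definition k1 (u : R -> R -> R) (tn1 : R) (x : R) : R := u x tn1.

Definition k2 (u : R -> R -> R) (tn1 dt : R) (x : R) : R :=
  u (x - dt / 2 * k1 u tn1 x) (tn1 - dt / 2).

Definition k3 (u : R -> R -> R) (tn1 dt : R) (x : R) : R :=
  u (x - dt * (- k1 u tn1 x + 2 * k2 u tn1 dt x)) (tn1 - dt).

Definition Xmap (u : R -> R -> R) (tn1 dt : R) (x : R) : R :=
  x - dt * (1/6 * k1 u tn1 x + 4/6 * k2 u tn1 dt x + 1/6 * k3 u tn1 dt x).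

Definition Xn (u : R -> R -> R) (t : nat -> R) (n : nat) : R -> R :=
  Xmap u (t (S n)) (t (S n) - t n).

(* |f|_{W^{m,oo}(T)} = || D^m f ||_{L^oo} (sup over R = sup over one period
   for 1-periodic D^m f), as an extended real (a least upper bound). *)
Definition Winf_semi (m : nat) (f : R -> R) : Rbar :=
  Lub_Rbar (fun r => exists x : R, r = Rabs (Derive_n f m x)).

Definition is_mesh (T : R) (N : nat) (t : nat -> R) : Prop :=
  t O = 0 /\ t N = T /\ (forall n, (n < N)%nat -> t n < t (S n)).

Fixpoint mesh_max (t : nat -> R) (N : nat) : R :=
  match N with
  | O => 0
  | S k => Rmax (mesh_max t k) (t (S k) - t k)
  end.

(* continuity of f on T x [0,T] (i.e. on R x [0,T], relative topology) *)
Definition cont_on_strip (T : R) (f : R -> R -> R) : Prop :=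
  forall x s, 0 <= s <= T ->
    filterlim (fun p : R * R => f (fst p) (snd p))
      (within (fun p : R * R => 0 <= snd p <= T) (locally (x, s)))
      (locally (f x s)).

(* Main.v *)
Require Import Defs.
From Stdlib Require Import Reals Lra Lia Psatz ZArith List Classical ClassicalEpsilon.
From Coquelicot Require Import Coquelicot.
Open Scope R_scope.

Lemma per_Z (f : R -> R -> R) s (Hp : forall x, f (x + 1) s = f x s) :
  forall k x, f (x + IZR k) s = f x s.
Proof.
  intro k. induction k using Z.peano_ind; intros x.
  - rewrite Rplus_0_r; reflexivity.
  - rewrite succ_IZR. replace (x + (IZR k + 1)) with ((x + IZR k) + 1) by ring.
    rewrite Hp. apply IHk.
  - rewrite <- (IHk x). rewrite <- Z.sub_1_r, minus_IZR.
    replace (x + IZR k) with ((x + (IZR k - 1)) + 1) by ring. rewrite Hp. reflexivity.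
Qed.

Fixpoint lmax (g : R * (R * unit) -> R) (l : list (R * (R * unit))) : R :=
  match l with nil => 0 | t :: l' => Rmax (g t) (lmax g l') end.

Lemma lmax_in g l t : In t l -> g t <= lmax g l.
Proof.
  induction l as [|a l IH]; simpl; [tauto|].
  intros [->|H]. apply Rmax_l. eapply Rle_trans. apply IH, H. apply Rmax_r.
Qed.

Lemma bound_strip (T : R) (f : R -> R -> R) :
  cont_on_strip T f -> (forall x s, 0 <= s <= T -> f (x + 1) s = f x s) ->
  exists M, forall x s, 0 <= s <= T -> Rabs (f x s) <= M.
Proof.
  intros Hc Hp.
  assert (Hd : forall p : R * (R * unit), exists d : posreal,
    0 <= fst (snd p) <= T -> forall y s, 0 <= s <= T ->
      Rabs (y - fst p) < d -> Rabs (s - fst (snd p)) < d ->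
      Rabs (f y s - f (fst p) (fst (snd p))) < 1).
  { intros [p1 [p2 []]]; simpl.
    destruct (Rle_dec 0 p2) as [h1|h1]; [destruct (Rle_dec p2 T) as [h2|h2]|].
    2,3: exists (mkposreal 1 Rlt_0_1); intros; lra.
    specialize (Hc p1 p2 (conj h1 h2) (ball (f p1 p2) (mkposreal 1 Rlt_0_1))
                  (locally_ball _ _)).
    destruct Hc as [e He]. exists e. intros _ y s Hs Hy Hs'.
    specialize (He (y, s)). simpl in He. apply He; [split|exact Hs]; exact Hy || exact Hs'. }
  pose (delta := fun p => proj1_sig (constructive_indefinite_description _ (Hd p))).
  assert (Hdelta := fun p => proj2_sig (constructive_indefinite_description _ (Hd p))).
  fold delta in Hdelta.
  pose proof (compactness_list 2 (0, (0, tt)) (1, (T, tt)) delta) as Hl.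
  apply NNPP; intro Hn; apply Hl; intros [l Hl']; apply Hn; clear Hl Hn.
  exists (lmax (fun t => Rabs (f (fst t) (fst (snd t))) + 1) l).
  assert (H01 : forall x s, 0 <= x <= 1 -> 0 <= s <= T ->
    Rabs (f x s) <= lmax (fun t => Rabs (f (fst t) (fst (snd t))) + 1) l).
  { intros x s Hx Hs.
    destruct (Hl' (x, (s, tt))) as [[t1 [t2 []]] [Hin [Hb Hcl]]].
    { simpl. tauto. }
    simpl in Hb, Hcl.
    eapply Rle_trans; [|apply (lmax_in _ _ _ Hin)]. simpl.
    assert (Hq := Hdelta (t1, (t2, tt)) (proj1 (proj2 Hb)) x s Hs (proj1 Hcl) (proj1 (proj2 Hcl))).
    simpl in Hq.
    pose proof (Rabs_triang_inv (f x s) (f t1 t2)). lra. }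
  intros x s Hs.
  destruct (base_Int_part x) as [h1 h2].
  replace x with ((x - IZR (Int_part x)) + IZR (Int_part x)) by ring.
  rewrite (per_Z f s (fun x => Hp x s Hs)).
  apply H01; [lra|exact Hs].
Qed.


Lemma d_eq (f : R -> R) x l l' : is_derive f x l -> l = l' -> is_derive f x l'.
Proof. intros H <-; exact H. Qed.
Lemma d_plus (f g : R -> R) x a b : is_derive f x a -> is_derive g x b ->
  is_derive (fun y => f y + g y) x (a + b).
Proof. intros; apply (is_derive_plus f g); assumption. Qed.
Lemma d_minus (f g : R -> R) x a b : is_derive f x a -> is_derive g x b ->
  is_derive (fun y => f y - g y) x (a - b).
Proof. intros; apply (is_derive_minus f g); assumption. Qed.
Lemma d_opp (f : R -> R) x a : is_derive f x a ->
  is_derive (fun y => - f y) x (- a).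
Proof. intros; apply (is_derive_opp f); assumption. Qed.
Lemma d_scal (f : R -> R) x k a : is_derive f x a ->
  is_derive (fun y => k * f y) x (k * a).
Proof. intros; apply (is_derive_scal f); assumption. Qed.
Lemma d_mult (f g : R -> R) x a b : is_derive f x a -> is_derive g x b ->
  is_derive (fun y => f y * g y) x (a * g x + f x * b).
Proof. intros; apply (is_derive_mult f g); try assumption. intros; apply Rmult_comm. Qed.
Lemma d_id x : is_derive (fun y : R => y) x 1.
Proof. apply (is_derive_id x). Qed.
Lemma d_const (c : R) x : is_derive (fun _ : R => c) x 0.
Proof. apply (is_derive_const c x). Qed.
Lemma d_comp (F : R -> R) (g : R -> R) (dF : R -> R) x dg :
  (forall y, is_derive F y (dF y)) -> is_derive g x dg ->
  is_derive (fun y => F (g y)) x (dg * dF (g x)).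
Proof. intros HF Hg. apply (is_derive_comp F g x (dF (g x)) dg (HF (g x)) Hg). Qed.

Lemma per_deriv (T : R) (g dg : R -> R -> R) :
  (forall x s, 0 <= s <= T -> is_derive (fun y => g y s) x (dg x s)) ->
  (forall x s, 0 <= s <= T -> g (x + 1) s = g x s) ->
  forall x s, 0 <= s <= T -> dg (x + 1) s = dg x s.
Proof.
  intros Hd Hp x s Hs.
  assert (H1 : is_derive (fun y => g (y + 1) s) x (dg (x + 1) s)).
  { eapply d_eq. apply (d_comp (fun y => g y s) (fun y => y + 1) (fun y => dg y s)).
    intro y; apply Hd, Hs. apply d_plus. apply d_id. apply d_const. match goal with |- ?a = ?b => change (@eq R a b) end; ring. }
  apply is_derive_unique in H1. rewrite <- H1.
  rewrite (Derive_ext _ (fun y => g y s)) by (intro; apply Hp; exact Hs).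
  apply is_derive_unique, Hd, Hs.
Qed.

Ltac req := match goal with |- ?a = ?b => change (@eq R a b) end; ring.

Section D.
Variables (u ux uxx : R -> R -> R) (s1 s2 s3 dt : R).
Hypothesis H1 : forall y, is_derive (fun z => u z s1) y (ux y s1).
Hypothesis H2 : forall y, is_derive (fun z => u z s2) y (ux y s2).
Hypothesis H3 : forall y, is_derive (fun z => u z s3) y (ux y s3).
Hypothesis G1 : forall y, is_derive (fun z => ux z s1) y (uxx y s1).
Hypothesis G2 : forall y, is_derive (fun z => ux z s2) y (uxx y s2).
Hypothesis G3 : forall y, is_derive (fun z => ux z s3) y (uxx y s3).
Hypothesis Hs2 : s2 = s1 - dt/2.
Hypothesis Hs3 : s3 = s1 - dt.
Definition fa x := x - dt/2 * u x s1.
Definition A1 x := 1 - dt/2 * ux x s1.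
Definition fb x := x - dt * (- u x s1 + 2 * u (fa x) s2).
Definition B1 x := 1 - dt * (- ux x s1 + 2 * (A1 x * ux (fa x) s2)).
Definition X1 x := 1 - dt * (1/6 * ux x s1 + 4/6 * (A1 x * ux (fa x) s2) + 1/6 * (B1 x * ux (fb x) s3)).
Definition A2 x := -(dt/2 * uxx x s1).
Definition K2 x := A2 x * ux (fa x) s2 + A1 x * (A1 x * uxx (fa x) s2).
Definition B2 x := -(dt * (- uxx x s1 + 2 * K2 x)).
Definition K3 x := B2 x * ux (fb x) s3 + B1 x * (B1 x * uxx (fb x) s3).
Definition X2 x := -(dt * (1/6 * uxx x s1 + 4/6 * K2 x + 1/6 * K3 x)).

Lemma d_fa x : is_derive fa x (A1 x).
Proof. unfold fa, A1. apply d_minus. apply d_id. apply d_scal. apply H1. Qed.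
Lemma d_A1 x : is_derive A1 x (A2 x).
Proof. unfold A1, A2. eapply d_eq. apply d_minus. apply d_const. apply d_scal. apply G1. req. Qed.
Lemma d_ua x : is_derive (fun y => u (fa y) s2) x (A1 x * ux (fa x) s2).
Proof. apply (d_comp (fun z => u z s2) fa (fun z => ux z s2)). exact H2. apply d_fa. Qed.
Lemma d_uxa x : is_derive (fun y => ux (fa y) s2) x (A1 x * uxx (fa x) s2).
Proof. apply (d_comp (fun z => ux z s2) fa (fun z => uxx z s2)). exact G2. apply d_fa. Qed.
Lemma d_fb x : is_derive fb x (B1 x).
Proof. unfold fb, B1. apply d_minus. apply d_id. apply d_scal. apply d_plus.
  apply d_opp. apply H1. apply d_scal. apply d_ua. Qed.
Lemma d_K2' x : is_derive (fun y => A1 y * ux (fa y) s2) x (K2 x).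
Proof. unfold K2. apply (d_mult A1 (fun y => ux (fa y) s2)). apply d_A1. apply d_uxa. Qed.
Lemma d_B1 x : is_derive B1 x (B2 x).
Proof. unfold B1, B2. eapply d_eq. apply d_minus. apply d_const. apply d_scal. apply d_plus.
  apply d_opp. apply G1. apply d_scal. apply d_K2'. req. Qed.
Lemma d_ub x : is_derive (fun y => u (fb y) s3) x (B1 x * ux (fb x) s3).
Proof. apply (d_comp (fun z => u z s3) fb (fun z => ux z s3)). exact H3. apply d_fb. Qed.
Lemma d_uxb x : is_derive (fun y => ux (fb y) s3) x (B1 x * uxx (fb x) s3).
Proof. apply (d_comp (fun z => ux z s3) fb (fun z => uxx z s3)). exact G3. apply d_fb. Qed.
Lemma d_K3' x : is_derive (fun y => B1 y * ux (fb y) s3) x (K3 x).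
Proof. unfold K3. apply (d_mult B1 (fun y => ux (fb y) s3)). apply d_B1. apply d_uxb. Qed.

Lemma d_X x : is_derive (Xmap u s1 dt) x (X1 x).
Proof.
  unfold Xmap, k3, k2, k1, X1. rewrite <- Hs2, <- Hs3.
  apply d_minus. apply d_id. apply d_scal. apply d_plus. apply d_plus.
  apply d_scal. apply H1. apply d_scal. apply d_ua. apply d_scal. apply d_ub.
Qed.
Lemma d_X1 x : is_derive X1 x (X2 x).
Proof.
  unfold X1, X2. eapply d_eq. apply d_minus. apply d_const. apply d_scal. apply d_plus. apply d_plus.
  apply d_scal. apply G1. apply d_scal. apply d_K2'. apply d_scal. apply d_K3'. req.
Qed.

Lemma Derive1_X x : Derive_n (Xmap u s1 dt) 1 x = X1 x.
Proof. apply is_derive_unique, d_X. Qed.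
Lemma Derive2_X x : Derive_n (Xmap u s1 dt) 2 x = X2 x.
Proof.
  simpl. rewrite (Derive_ext _ X1). apply is_derive_unique, d_X1.
  intro; apply is_derive_unique, d_X.
Qed.

Lemma ab_mul p q P Q : Rabs p <= P -> Rabs q <= Q -> Rabs (p * q) <= P * Q.
Proof. intros; rewrite Rabs_mult; apply Rmult_le_compat; auto using Rabs_pos. Qed.
Lemma ab_add p q P Q : Rabs p <= P -> Rabs q <= Q -> Rabs (p + q) <= P + Q.
Proof. intros; eapply Rle_trans; [apply Rabs_triang|lra]. Qed.
Lemma ab_sub p q P Q : Rabs p <= P -> Rabs q <= Q -> Rabs (p - q) <= P + Q.
Proof. intros; eapply Rle_trans; [apply Rabs_triang|]. rewrite Rabs_Ropp; lra. Qed.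
Lemma ab_opp p P : Rabs p <= P -> Rabs (- p) <= P.
Proof. rewrite Rabs_Ropp; auto. Qed.
Lemma ab_c c : 0 <= c -> Rabs c <= c.
Proof. intros; rewrite Rabs_pos_eq; lra. Qed.

Variable M : R.
Hypothesis HM : 1 <= M.
Hypothesis Hdt : 0 < dt <= 1.
Hypothesis B1s : forall y, Rabs (ux y s1) <= M.
Hypothesis B2s : forall y, Rabs (ux y s2) <= M.
Hypothesis B3s : forall y, Rabs (ux y s3) <= M.
Hypothesis C1s : forall y, Rabs (uxx y s1) <= M.
Hypothesis C2s : forall y, Rabs (uxx y s2) <= M.
Hypothesis C3s : forall y, Rabs (uxx y s3) <= M.

Ltac fin := match goal with |- ?a <= ?b => change (@Rle a b) end; nra.

Lemma bA1 x : Rabs (A1 x) <= 2 * M.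
Proof. unfold A1. eapply Rle_trans. apply ab_sub. apply (ab_c 1); lra.
  apply ab_mul. apply ab_c; lra. apply B1s. fin. Qed.
Lemma bA2 x : Rabs (A2 x) <= M.
Proof. unfold A2. eapply Rle_trans. apply ab_opp. apply ab_mul. apply ab_c; lra. apply C1s. fin. Qed.
Lemma bK2p x : Rabs (A1 x * ux (fa x) s2) <= 2 * M * M.
Proof. apply ab_mul. apply bA1. apply B2s. Qed.
Lemma bK2 x : Rabs (K2 x) <= 5 * M ^ 3.
Proof. unfold K2. eapply Rle_trans. apply ab_add. apply ab_mul. apply bA2. apply B2s.
  apply ab_mul. apply bA1. apply ab_mul. apply bA1. apply C2s.
  assert (M * M <= M ^ 3) by nra. fin. Qed.
Lemma bB1 x : Rabs (B1 x) <= 6 * M ^ 2.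
Proof. unfold B1. eapply Rle_trans. apply ab_sub. apply (ab_c 1); lra.
  apply ab_mul. apply ab_c; lra. apply ab_add. apply ab_opp. apply B1s.
  apply ab_mul. apply ab_c; lra. apply bK2p.
  assert (0 <= M + 2 * (2 * M * M)) by nra. fin. Qed.
Lemma bB2 x : Rabs (B2 x) <= 11 * M ^ 3.
Proof. unfold B2. eapply Rle_trans. apply ab_opp. apply ab_mul. apply ab_c; lra.
  apply ab_add. apply ab_opp. apply C1s. apply ab_mul. apply ab_c; lra. apply bK2.
  assert (M <= M ^ 3) by nra. assert (0 <= M + 2 * (5 * M^3)) by nra. fin. Qed.
Lemma bK3 x : Rabs (K3 x) <= 47 * M ^ 5.
Proof. unfold K3. eapply Rle_trans. apply ab_add. apply ab_mul. apply bB2. apply B3s.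
  apply ab_mul. apply bB1. apply ab_mul. apply bB1. apply C3s.
  assert (M ^ 4 <= M ^ 5) by (assert (0 <= M^4) by nra; nra). fin. Qed.
Lemma bX1 x : Rabs (X1 x - 1) <= dt * (3 * M ^ 3).
Proof. unfold X1. replace (1 - dt * (1 / 6 * ux x s1 + 4 / 6 * (A1 x * ux (fa x) s2) + 1 / 6 * (B1 x * ux (fb x) s3)) - 1)
  with (- (dt * (1 / 6 * ux x s1 + 4 / 6 * (A1 x * ux (fa x) s2) + 1 / 6 * (B1 x * ux (fb x) s3)))) by ring.
  apply ab_opp. apply ab_mul. apply ab_c; lra.
  eapply Rle_trans. apply ab_add. apply ab_add.
  apply ab_mul. apply ab_c; lra. apply B1s.
  apply ab_mul. apply ab_c; lra. apply bK2p.
  apply ab_mul. apply ab_c; lra. apply ab_mul. apply bB1. apply B3s.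
  assert (M <= M ^ 3) by nra. assert (M * M <= M ^ 3) by nra. fin. Qed.
Lemma bX2 x : Rabs (X2 x) <= dt * (12 * M ^ 5).
Proof. unfold X2.
  apply ab_opp. apply ab_mul. apply ab_c; lra.
  eapply Rle_trans. apply ab_add. apply ab_add.
  apply ab_mul. apply ab_c; lra. apply C1s.
  apply ab_mul. apply ab_c; lra. apply bK2.
  apply ab_mul. apply ab_c; lra. apply bK3.
  assert (M <= M ^ 3) by nra. assert (M^3 <= M ^ 5) by nra. fin. Qed.
End D.

Lemma W_ub f m (B : R) : (forall x, Rabs (Derive_n f m x) <= B) -> Rbar_le (Winf_semi m f) B.
Proof.
  intro H. unfold Winf_semi.
  destruct (Lub_Rbar_correct (fun r => exists x : R, r = Rabs (Derive_n f m x))) as [_ H2].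
  apply H2. intros r [x ->]. simpl. apply H.
Qed.
Lemma W_lb f m (B : R) x : B <= Rabs (Derive_n f m x) -> Rbar_le B (Winf_semi m f).
Proof.
  intro H. unfold Winf_semi.
  destruct (Lub_Rbar_correct (fun r => exists x : R, r = Rabs (Derive_n f m x))) as [H1 _].
  eapply Rbar_le_trans; [|apply H1; exists x; reflexivity]. simpl. exact H.
Qed.

Lemma mesh_facts T N t : is_mesh T N t -> forall n, (n < N)%nat ->
  0 <= t n /\ t (S n) <= T /\ t n < t (S n) /\ t (S n) - t n <= mesh_max t N.
Proof.
  intros [H0 [HN Hi]] n Hn.
  assert (Hpos : forall k, (k <= N)%nat -> 0 <= t k).
  { induction k; intros Hk. lra. pose proof (Hi k ltac:(lia)). pose proof (IHk ltac:(lia)). lra. }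
  assert (Hmon : forall j k, (k + j <= N)%nat -> t k <= t (k + j)%nat).
  { induction j; intros k Hk. rewrite Nat.add_0_r; lra.
    replace (k + S j)%nat with (S (k + j)) by lia.
    pose proof (Hi (k + j)%nat ltac:(lia)). pose proof (IHj k ltac:(lia)). lra. }
  repeat split.
  - apply Hpos; lia.
  - rewrite <- HN. pose proof (Hmon (N - S n)%nat (S n) ltac:(lia)) as Hq.
    replace (S n + (N - S n))%nat with N in Hq by lia. exact Hq.
  - apply Hi, Hn.
  - clear -Hn. induction N. lia. simpl.
    destruct (Nat.eq_dec n N) as [->|Hne]. apply Rmax_r.
    eapply Rle_trans; [apply IHN; lia|apply Rmax_l].
Qed.

Lemma arith1 c k : 0 <= c <= 1/2 -> 0 <= k <= c / 4 -> 1 / (1 + c) <= 1 - k.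
Proof.
  intros Hc Hk. unfold Rdiv. rewrite Rmult_1_l.
  apply (Rmult_le_reg_r (1 + c)); [lra|]. rewrite Rinv_l by lra. nra.
Qed.

Theorem lemma8 (T : R) (u ux uxx : R -> R -> R)
  (HT : 0 < T)
  (Hper : forall x s, u (x + 1) s = u x s)
  (Hux : forall x s, 0 <= s <= T -> is_derive (fun y => u y s) x (ux x s))
  (Huxx : forall x s, 0 <= s <= T -> is_derive (fun y => ux y s) x (uxx x s))
  (Hcu : cont_on_strip T u)
  (Hcux : cont_on_strip T ux)
  (Hcuxx : cont_on_strip T uxx) :
  exists C : R, 0 < C /\
  exists delta : R, 0 < delta /\
  forall (N : nat) (t : nat -> R),
    is_mesh T N t -> mesh_max t N <= delta ->
    forall n : nat, (n < N)%nat ->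
      let dtn := t (S n) - t n in
      1 / 2 <= 1 / (1 + C * dtn) /\
      Rbar_le (Finite (1 / (1 + C * dtn))) (Winf_semi 1 (Xn u t n)) /\
      Rbar_le (Winf_semi 1 (Xn u t n)) (Finite (1 + C * dtn)) /\
      1 + C * dtn <= 3 / 2 /\
      Rbar_le (Winf_semi 2 (Xn u t n)) (Finite (C * dtn)).
Proof.
  assert (Pux : forall x s, 0 <= s <= T -> ux (x + 1) s = ux x s).
  { apply (per_deriv T u ux Hux). intros; apply Hper. }
  assert (Puxx : forall x s, 0 <= s <= T -> uxx (x + 1) s = uxx x s).
  { apply (per_deriv T ux uxx Huxx Pux). }
  destruct (bound_strip T ux Hcux Pux) as [M1 HM1].
  destruct (bound_strip T uxx Hcuxx Puxx) as [M2 HM2].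
  set (M := Rmax 1 (Rmax M1 M2)).
  assert (HM : 1 <= M) by apply Rmax_l.
  assert (HMa : forall x s, 0 <= s <= T -> Rabs (ux x s) <= M).
  { intros. eapply Rle_trans. apply HM1; auto. unfold M. eapply Rle_trans; [|apply Rmax_r]. apply Rmax_l. }
  assert (HMb : forall x s, 0 <= s <= T -> Rabs (uxx x s) <= M).
  { intros. eapply Rle_trans. apply HM2; auto. unfold M. eapply Rle_trans; [|apply Rmax_r]. apply Rmax_r. }
  assert (HM3 : 1 <= M ^ 3) by (pose proof (pow_R1_Rle M 3 HM); lra).
  assert (HM35 : M ^ 3 <= M ^ 5).
  { replace (M^5) with (M^3 * (M * M)) by ring. assert (1 <= M * M) by nra. nra. }
  set (C := 12 * M ^ 5).
  assert (HC : 12 <= C) by (unfold C; lra).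
  exists C. split. lra.
  exists (1 / (2 * C)). split. apply Rdiv_lt_0_compat; lra.
  intros N t Hmesh Hmax n Hn dtn.
  destruct (mesh_facts T N t Hmesh n Hn) as [Ht0 [Ht1 [Htl Hdm]]].
  assert (Hdt : 0 < dtn) by (unfold dtn; lra).
  assert (HCdt : C * dtn <= 1/2).
  { assert (dtn <= 1 / (2 * C)) by (unfold dtn; lra).
    apply (Rmult_le_compat_l C) in H; [|lra].
    replace (C * (1 / (2 * C))) with (1/2) in H by (field; lra). exact H. }
  assert (Hdt1 : 0 < dtn <= 1) by (split; [lra| nra]).
  set (s1 := t (S n)). set (s2 := s1 - dtn / 2). set (s3 := s1 - dtn).
  assert (Hs1 : 0 <= s1 <= T) by (unfold s1; lra).
  assert (Hs2 : 0 <= s2 <= T) by (unfold s2, s1, dtn in *; lra).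
  assert (Hs3 : 0 <= s3 <= T) by (unfold s3, s1, dtn in *; lra).
  assert (E1 : forall x, Derive_n (Xn u t n) 1 x = X1 u ux s1 s2 s3 dtn x).
  { intro x. unfold Xn. apply Derive1_X; try reflexivity; intro y; apply Hux; assumption. }
  assert (E2 : forall x, Derive_n (Xn u t n) 2 x = X2 u ux uxx s1 s2 s3 dtn x).
  { intro x. unfold Xn. apply Derive2_X; try reflexivity; intro y;
    first [apply Hux; assumption | apply Huxx; assumption]. }
  assert (B1 := fun x => bX1 u ux s1 s2 s3 dtn M HM Hdt1
     (fun y => HMa y s1 Hs1) (fun y => HMa y s2 Hs2) (fun y => HMa y s3 Hs3) x).
  assert (B2 := fun x => bX2 u ux uxx s1 s2 s3 dtn M HM Hdt1
     (fun y => HMa y s1 Hs1) (fun y => HMa y s2 Hs2) (fun y => HMa y s3 Hs3)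
     (fun y => HMb y s1 Hs1) (fun y => HMb y s2 Hs2) (fun y => HMb y s3 Hs3) x).
  assert (HK : dtn * (3 * M ^ 3) <= C * dtn / 4) by (unfold C; nra).
  assert (HK0 : 0 <= dtn * (3 * M ^ 3)) by nra.
  split; [|split; [|split; [|split]]].
  - apply Rmult_le_compat_l with (r := 1) in HCdt; [|lra].
    unfold Rdiv. rewrite !Rmult_1_l. apply Rinv_le_contravar; nra.
  - apply (W_lb _ _ _ 0). rewrite E1.
    eapply Rle_trans. apply (arith1 (C * dtn) (dtn * (3 * M ^ 3))); split; nra.
    pose proof (B1 0). pose proof (Rle_abs (X1 u ux s1 s2 s3 dtn 0)).
    pose proof (Rle_abs (- (X1 u ux s1 s2 s3 dtn 0 - 1))) as Hq. rewrite Rabs_Ropp in Hq. lra.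
  - apply W_ub. intro x. rewrite E1. pose proof (B1 x).
    pose proof (Rabs_triang (X1 u ux s1 s2 s3 dtn x - 1) 1). rewrite Rabs_R1 in H0.
    replace (X1 u ux s1 s2 s3 dtn x - 1 + 1) with (X1 u ux s1 s2 s3 dtn x) in H0 by ring.
    nra.
  - lra.
  - apply W_ub. intro x. rewrite E2. pose proof (B2 x). unfold C. nra.
Qed.
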